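(* Consider $\min_{y\in\mathbb R^{n_y}}\sum_{i\in\mathcal I}f_i(y)$ with nonempty solution set $\mathcal Y^\star$, where each $f_i$ depends only on $(y_p)_{p\in\mathcal N(i)}$, and the stacked iteration $$\boldsymbol y^{k+1}=A\boldsymbol y^k-\gamma B\nabla\boldsymbol f(\boldsymbol y^k)-\boldsymbol z^k,\qquad \boldsymbol z^{k+1}=\boldsymbol z^k+C\boldsymbol y^{k+1},$$ with $A=\mathrm{diag}((A_p\otimes I_{n_{y_p}})_p)$, $B=\mathrm{diag}((B_p\otimes I_{n_{y_p}})_p)$, $C=\mathrm{diag}((C_p\otimes I_{n_{y_p}})_p)$ for matrices $A_p,B_p,C_p\in\mathbb R^{N_p\times N_p}$. Let $D=\mathrm{diag}((D_p\otimes I_{n_{y_p}})_p)$ for some $D_p\in\mathbb R^{N_p\times N_p}$. Assume each $f_i$ is convex and $L$-smooth, and: (i) $A=BD$, $B\succeq0$, $D\succ0$; (ii) $D\boldsymbol y=\boldsymbol y$ and $B\boldsymbol y=\boldsymbol y$ for all $\boldsymbol y\in\mathcal C$; (iii) $C\succeq0$ and $\mathrm{null}(C)=\mathcal C$; (iv) $BC=CB$; (v) $I-\tfrac12C-\sqrt B\,D\sqrt B\succeq0$. Let $y^\star\in\mathcal Y^\star$, $\boldsymbol y^\star$ the stacked vector with all estimates of $y_p$ equal to $y^\star_p$, and $\mathfrak M(\boldsymbol y):=\max\{\|\Pi_\perp\boldsymbol y\|\,\|\nabla\boldsymbol f(\boldsymbol y^\star)\|,\ |\boldsymbol f(\boldsymbol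 y)-\boldsymbol f(\boldsymbol y^\star)|\}$. Then for any $\boldsymbol y^0$, $\boldsymbol z^0=0$ and $\gamma\in(0,\lambda_{\min}(D)/L)$, the sequence satisfies $\mathfrak M(\boldsymbol y^k_{\mathrm{avg}})\le\mathcal O(1/k)$ for all $k$, where $\boldsymbol y^k_{\mathrm{avg}}=\frac1k\sum_{t=1}^k\boldsymbol y^t$.
   Context: Agents $\mathcal I=\{1,\dots,I\}$; $y=\mathrm{col}((y_p)_{p\in\mathcal P})$, $\mathcal P=\{1,\dots,P\}$, $y_p\in\mathbb R^{n_{y_p}}$; $\mathcal N(i)\subseteq\mathcal P$ are the blocks on which $f_i$ depends. For each $p$, a set $\mathcal V_p\subseteq\mathcal I$ with $\{i:p\in\mathcal N(i)\}\subseteq\mathcal V_p$, $N_p=|\mathcal V_p|$; agent $i\in\mathcal V_p$ keeps $\boldsymbol y_{i,p},\boldsymbol z_{i,p}\in\mathbb R^{n_{y_p}}$, indexed by its position $i_p$ in $\mathcal V_p$. Stacked: $\boldsymbol y=\mathrm{col}((\boldsymbol y_p)_p)$, $\boldsymbol y_p=\mathrm{col}((\boldsymbol y_{i,p})_{i\in\mathcal V_p})$, similarly $\boldsymbol z$. $\tilde{\boldsymbol y}_i$ collects agent $i$'s estimates and $\boldsymbol f(\boldsymbol y)=\sum_i f_i(\tilde{\boldsymbol y}_i)$ ($f_i$ evaluated with $y_p$ replaced by $\boldsymbol y_{i,p}$); thus the $(i,p)$ block of $\nabla\boldsymbol f(\boldsymbol y)$ is $\nabla_{y_p}f_i(\tilde{\boldsymbol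 y}_i)$. Consensus space $\mathcal C=\{\boldsymbol y:\boldsymbol y_p=\mathbf 1_{N_p}\otimes v_p,\ v_p\in\mathbb R^{n_{y_p}}\ \forall p\}$; $\Pi_\parallel=\mathrm{diag}((\tfrac1{N_p}\mathbf 1\mathbf 1^\top\otimes I_{n_{y_p}})_p)$ and $\Pi_\perp=I-\Pi_\parallel$. *)

(* Defs.v *)
From HB Require Import structures.
From mathcomp Require Import all_boot all_order all_algebra.
From mathcomp Require Import reals.
Set Implicit Arguments.
Unset Strict Implicit.
Unset Printing Implicit Defensive.
Import Order.TTheory GRing.Theory Num.Theory.
Local Open Scope ring_scope.

Section Euclid.
Variables (R : realType) (T : finType).

Definition dotv (x y : T -> R) : R := \sum_t x t * y t.
Definition normv (x : T -> R) : R := Num.sqrt (dotv x x).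
Definition subv (x y : T -> R) : T -> R := fun t => x t - y t.

Definition has_gradient (f : (T -> R) -> R) (g : (T -> R) -> (T -> R)) :=
  forall x (eps : R), 0 < eps -> exists2 del : R, 0 < del &
    forall h : T -> R, normv h < del ->
      `|f (fun t => x t + h t) - f x - dotv (g x) h| <= eps * normv h.

Definition convex_fun (f : (T -> R) -> R) :=
  forall (x y : T -> R) (a : R), 0 <= a -> a <= 1 ->
    f (fun t => a * x t + (1 - a) * y t) <= a * f x + (1 - a) * f y.

Definition L_smooth (L : R) (f : (T -> R) -> R) (g : (T -> R) -> (T -> R)) :=
  has_gradient f g /\
  forall x y, normv (subv (g x) (g y)) <= L * normv (subv x y).

Definition symmetric_op (M : (T -> R) -> (T -> R)) :=
  forall x y, dotv (M x) y = dotv x (M y).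
Definition psd_op (M : (T -> R) -> (T -> R)) :=
  symmetric_op M /\ forall x, 0 <= dotv x (M x).
Definition pd_op (M : (T -> R) -> (T -> R)) :=
  symmetric_op M /\ forall x, (exists t, x t != 0) -> 0 < dotv x (M x).
Definition op_eigenvalue (M : (T -> R) -> (T -> R)) (lam : R) :=
  exists x : T -> R, (exists t, x t != 0) /\ forall t, M x t = lam * x t.
Definition is_lambda_min (M : (T -> R) -> (T -> R)) (lam : R) :=
  op_eigenvalue M lam /\ forall mu, op_eigenvalue M mu -> lam <= mu.
End Euclid.

Section Network.
Variables (R : realType) (P I : nat) (n : 'I_P -> nat) (V : 'I_P -> {set 'I_I}).

(* index set of y = col((y_p)_p), y_p in R^{n_{y_p}} *)
Definition Yidx := {p : 'I_P & 'I_(n p)}.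
(* index set of the stacked estimate vector: block p, position j (of agent
   enum_val j) in V_p, coordinate c *)
Definition Sidx := {p : 'I_P & ('I_#|V p| * 'I_(n p))%type}.

Definition agent_of (p : 'I_P) (j : 'I_#|V p|) : 'I_I := enum_val j.

(* tilde y_i : agent i's estimates, y_p replaced by y_{i,p}
   (components for p with i \notin V_p are irrelevant, set to 0) *)
Definition loc (y : Sidx -> R) (i : 'I_I) : Yidx -> R :=
  fun u => let: existT p c := u in
    match [pick j : 'I_#|V p| | agent_of j == i] with
    | Some j => y (existT _ p (j, c))
    | None => 0
    end.

Definition fobj (f : 'I_I -> (Yidx -> R) -> R) (y : Sidx -> R) : R :=
  \sum_i f i (loc y i).

Definition gradS (g : 'I_I -> (Yidx -> R) -> (Yidx -> R)) (y : Sidx -> R)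
  : Sidx -> R :=
  fun s => let: existT p (j, c) := s in
    g (agent_of j) (loc y (agent_of j)) (existT _ p c).

(* stacked block-diagonal operator diag((M_p (x) I_{n_{y_p}})_p) *)
Definition bdiag (M : forall p : 'I_P, 'M[R]_#|V p|) (y : Sidx -> R)
  : Sidx -> R :=
  fun s => let: existT p (j, c) := s in
    \sum_(j' : 'I_#|V p|) M p j j' * y (existT _ p (j', c)).

Definition consensus (y : Sidx -> R) :=
  forall p (j j' : 'I_#|V p|) (c : 'I_(n p)),
    y (existT _ p (j, c)) = y (existT _ p (j', c)).

Definition Pi_par (y : Sidx -> R) : Sidx -> R :=
  fun s => let: existT p (j, c) := s in
    (#|V p|%:R)^-1 * \sum_(j' : 'I_#|V p|) y (existT _ p (j', c)).
Definition Pi_perp (y : Sidx -> R) : Sidx -> R :=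
  fun s => y s - Pi_par y s.

Definition lift (ystar : Yidx -> R) : Sidx -> R :=
  fun s => let: existT p (j, c) := s in ystar (existT _ p c).

Definition yavg (ys : nat -> Sidx -> R) (k : nat) : Sidx -> R :=
  fun s => (k%:R)^-1 * \sum_(1 <= t < k.+1) ys t s.

Definition merit (f : 'I_I -> (Yidx -> R) -> R)
  (g : 'I_I -> (Yidx -> R) -> (Yidx -> R)) (ystar : Yidx -> R)
  (y : Sidx -> R) : R :=
  Num.max (normv (Pi_perp y) * normv (gradS g (lift ystar)))
          `|fobj f y - fobj f (lift ystar)|.
End Network.

Arguments bdiag {R P I} n {V} M y _.

(* Main.v *)
Require Import Defs.
From HB Require Import structures.
From mathcomp Require Import all_boot all_order all_algebra.
From mathcomp Require Import reals.
From mathcomp Require Import ring lra.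
From Stdlib Require Import FunctionalExtensionality Classical.
Import Order.TTheory GRing.Theory Num.Theory.
Local Open Scope ring_scope.

Set Implicit Arguments.
Unset Strict Implicit.
Unset Printing Implicit Defensive.


Section Gen.
Variables (R : realType) (T : finType).
Implicit Types (x y u v w : T -> R) (M : (T -> R) -> (T -> R)).

Definition dlt (s : T) : T -> R := fun t => (t == s)%:R.

Lemma dotv_dltr x s : dotv x (dlt s) = x s.
Proof.
rewrite /dotv (bigD1 s) //= /dlt eqxx mulr1 big1 ?addr0 // => t /negbTE ->.
by rewrite mulr0.
Qed.

Lemma dotvC x y : dotv x y = dotv y x.
Proof. by apply: eq_bigr => t _; rewrite mulrC. Qed.

Lemma dotv_dltl x s : dotv (dlt s) x = x s.
Proof. by rewrite dotvC dotv_dltr. Qed.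

Lemma dotv_lin a b x y z :
  dotv (fun t => a * x t + b * y t) z = a * dotv x z + b * dotv y z.
Proof.
rewrite /dotv !mulr_sumr -big_split /=; apply: eq_bigr => t _; ring.
Qed.

Lemma dotvDl x y z : dotv (fun t => x t + y t) z = dotv x z + dotv y z.
Proof. by rewrite /dotv -big_split /=; apply: eq_bigr => t _; ring. Qed.

Lemma dotvBl x y z : dotv (fun t => x t - y t) z = dotv x z - dotv y z.
Proof. by rewrite /dotv -sumrB /=; apply: eq_bigr => t _; ring. Qed.

Lemma dotvZl a x z : dotv (fun t => a * x t) z = a * dotv x z.
Proof. by rewrite /dotv mulr_sumr; apply: eq_bigr => t _; ring. Qed.

Lemma dotvDr x y z : dotv z (fun t => x t + y t) = dotv z x + dotv z y.
Proof. by rewrite dotvC dotvDl !(dotvC z). Qed.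

Lemma dotvBr x y z : dotv z (fun t => x t - y t) = dotv z x - dotv z y.
Proof. by rewrite dotvC dotvBl !(dotvC z). Qed.

Lemma dotvZr a x z : dotv z (fun t => a * x t) = a * dotv z x.
Proof. by rewrite dotvC dotvZl dotvC. Qed.

Lemma dotv0l z : dotv (fun _ : T => 0 : R) z = 0.
Proof. by rewrite /dotv big1 // => t _; rewrite mul0r. Qed.

Lemma dotv_ge0 x : 0 <= dotv x x.
Proof. by apply: sumr_ge0 => t _; rewrite -expr2 sqr_ge0. Qed.

Lemma dotv_eq0 x : dotv x x = 0 -> forall t, x t = 0.
Proof.
move=> h t.
have h1 : forall i : T, true -> 0 <= x i * x i by move=> i _; rewrite -expr2 sqr_ge0.
have h2 := psumr_eq0P h1 h.
by apply/eqP; rewrite -sqrf_eq0 expr2; apply/eqP; apply: h2.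
Qed.


Lemma symE M s t : symmetric_op M -> M (dlt s) t = M (dlt t) s.
Proof. by move=> hM; rewrite -dotv_dltr hM dotv_dltl. Qed.

Lemma symK M x s : symmetric_op M -> M x s = \sum_t M (dlt t) s * x t.
Proof.
move=> hM; rewrite -dotv_dltr hM /dotv; apply: eq_bigr => t _.
by rewrite mulrC (symE _ _ hM).
Qed.

Lemma sym_lin M a b x y s : symmetric_op M ->
  M (fun t => a * x t + b * y t) s = a * M x s + b * M y s.
Proof.
move=> hM; rewrite !(symK _ _ hM) !mulr_sumr -big_split /=.
by apply: eq_bigr => t _; ring.
Qed.

Lemma symD M x y s : symmetric_op M ->
  M (fun t => x t + y t) s = M x s + M y s.
Proof.
move=> hM; rewrite !(symK _ _ hM) -big_split /=.
by apply: eq_bigr => t _; ring.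
Qed.

Lemma symB M x y s : symmetric_op M ->
  M (fun t => x t - y t) s = M x s - M y s.
Proof.
move=> hM; rewrite !(symK _ _ hM) -sumrB /=.
by apply: eq_bigr => t _; ring.
Qed.

Lemma symZ M a x s : symmetric_op M ->
  M (fun t => a * x t) s = a * M x s.
Proof.
move=> hM; rewrite !(symK _ _ hM) mulr_sumr.
by apply: eq_bigr => t _; ring.
Qed.

Lemma sym0 M s : symmetric_op M -> M (fun _ => 0) s = 0.
Proof.
move=> hM; rewrite (symK _ _ hM) big1 // => t _; by rewrite mulr0.
Qed.

Lemma sym_ext M x y : (forall t, x t = y t) -> M x = M y.
Proof. by move=> h; congr M; apply: functional_extensionality. Qed.

Lemma quad_disc (a b c : R) : 0 <= c ->
  (forall t, 0 <= a + 2 * t * b + t ^+ 2 * c) -> b ^+ 2 <= a * c.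
Proof.
move=> c0 H; have [ce|cn0] := eqVneq c 0.
  rewrite ce in H *.
  have [->|bn0] := eqVneq b 0; first by rewrite expr0n mulr0.
  have := H (- (a + 1) / (2 * b)).
  rewrite mulr0 addr0.
  have -> : a + 2 * (- (a + 1) / (2 * b)) * b = -1.
    by field.
  by rewrite oppr_ge0 ler10.
have cp : 0 < c by rewrite lt0r cn0.
have := H (- b / c).
have -> : a + 2 * (- b / c) * b + (- b / c) ^+ 2 * c = a - b ^+ 2 / c.
  by field.
by rewrite subr_ge0 ler_pdivrMr.
Qed.

Lemma dotv_linr a b x y z :
  dotv z (fun t => a * x t + b * y t) = a * dotv z x + b * dotv z y.
Proof. by rewrite dotvC dotv_lin (dotvC x) (dotvC y). Qed.

Lemma psd_CS M x y : psd_op M ->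
  dotv x (M y) ^+ 2 <= dotv x (M x) * dotv y (M y).
Proof.
move=> [hs hp]; apply: quad_disc; first exact: hp.
move=> t; have := hp (fun s => 1 * x s + t * y s).
have -> : M (fun s => 1 * x s + t * y s) = fun s => 1 * M x s + t * M y s.
  by apply: functional_extensionality => s; rewrite sym_lin.
rewrite dotv_lin !dotv_linr.
have -> : dotv y (M x) = dotv x (M y) by rewrite dotvC hs.
lra.
Qed.

Lemma psd_id : psd_op (fun x : T -> R => x).
Proof. by split => // x; exact: dotv_ge0. Qed.

Lemma CS x y : dotv x y ^+ 2 <= dotv x x * dotv y y.
Proof. exact: (psd_CS x y psd_id). Qed.

Lemma psd_zero M x : psd_op M -> dotv x (M x) = 0 -> forall s, M x s = 0.
Proof.
move=> hM h; apply: dotv_eq0; apply/eqP; rewrite -sqrf_eq0 eq_le sqr_ge0 andbT.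
have := psd_CS (M x) x hM; rewrite h mulr0.
by [].
Qed.

Lemma kern_bound (q : T -> T -> R) x :
  dotv (fun s => \sum_t q s t * x t) (fun s => \sum_t q s t * x t)
  <= (\sum_s \sum_t q s t ^+ 2) * dotv x x.
Proof.
rewrite /dotv mulr_suml; apply: ler_sum => s _.
have := CS (q s) x; rewrite /dotv -expr2.
suff -> : \sum_t q s t * q s t = \sum_t q s t ^+ 2 by [].
by apply: eq_bigr => t _; rewrite expr2.
Qed.

End Gen.


Section Gen3.
Variables (R : realType) (T : finType).
Implicit Types (x y u v w : T -> R) (M : (T -> R) -> (T -> R)).

Local Notation N := #|T|.
Local Notation ev := (@enum_val T T).
Local Notation rk := (@enum_rank T).

Lemma sum_enum (F : T -> R) : \sum_(t : T) F t = \sum_(i < N) F (ev i).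
Proof.
rewrite (reindex ev) //; exists rk => i _; [exact: enum_valK | exact: enum_rankK].
Qed.

Lemma evK (i : 'I_N) : rk (ev i) = i. Proof. exact: enum_valK. Qed.
Lemma rkK (t : T) : ev (rk t) = t. Proof. exact: enum_rankK. Qed.

Definition mxo M : 'M[R]_N := \matrix_(i, j) M (dlt R (ev j)) (ev i).
Definition cvx x : 'cV[R]_N := \col_i x (ev i).

Lemma mxoE M x s : symmetric_op M -> M x s = (mxo M *m cvx x) (rk s) 0.
Proof.
move=> hM; rewrite (symK _ _ hM) sum_enum !mxE; apply: eq_bigr => i _.
by rewrite !mxE enum_rankK.
Qed.

Lemma cvxM M x : symmetric_op M -> cvx (M x) = mxo M *m cvx x.
Proof.
by move=> hM; apply/colP => i; rewrite [LHS]mxE (mxoE _ _ hM) enum_valK.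
Qed.

Lemma mxo_tr M : symmetric_op M -> (mxo M)^T = mxo M.
Proof. by move=> hM; apply/matrixP => i j; rewrite !mxE (symE _ _ hM). Qed.


Definition inj_op M := forall x, (forall s, M x s = 0) -> forall s, x s = 0.

Lemma sym_inv M : symmetric_op M -> inj_op M ->
  exists q : T -> T -> R, forall u s, M (fun t => \sum_r q t r * u r) s = u s.
Proof.
move=> hM hinj; set A := mxo M.
have Au : A \in unitmx.
  rewrite unitmxE unitfE; apply/negP => /det0P [v vn0 vA].
  pose x := fun t => v 0 (rk t).
  have hx : forall s, M x s = 0.
    move=> s; rewrite (mxoE _ _ hM).
    have -> : cvx x = v^T.
      by apply/colP => i; rewrite !mxE /x; congr (v _ _); exact: enum_valK.
    by rewrite -(mxo_tr hM) -trmx_mul vA !mxE.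
  move/eqP: vn0; apply; apply/rowP => i; rewrite !mxE.
  by have := hinj x hx (ev i); rewrite /x enum_valK.
exists (fun t r => invmx A (rk t) (rk r)) => u s.
rewrite (mxoE _ _ hM).
have -> : cvx (fun t => \sum_r invmx A (rk t) (rk r) * u r) = invmx A *m cvx u.
  apply/colP => i; rewrite !mxE sum_enum; apply: eq_bigr => j _.
  by rewrite !mxE !enum_valK.
by rewrite mulmxA mulmxV // mul1mx mxE enum_rankK.
Qed.

Lemma sym_bound M : symmetric_op M ->
  exists K, 0 <= K /\ forall x, dotv (M x) (M x) <= K * dotv x x.
Proof.
move=> hM; exists (\sum_s \sum_t M (dlt R t) s ^+ 2); split.
  by apply: sumr_ge0 => s _; apply: sumr_ge0 => t _; exact: sqr_ge0.
move=> x; have -> : M x = fun s => \sum_t M (dlt R t) s * x t.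
  by apply: functional_extensionality => s; rewrite (symK _ _ hM).
exact: kern_bound.
Qed.

Lemma sym_inv_bound M : symmetric_op M -> inj_op M ->
  exists K, 0 <= K /\ forall x, dotv x x <= K * dotv (M x) (M x).
Proof.
move=> hM hinj; have [q hq] := sym_inv hM hinj.
exists (\sum_s \sum_t q s t ^+ 2); split.
  by apply: sumr_ge0 => s _; apply: sumr_ge0 => t _; exact: sqr_ge0.
move=> x; have ex : x = fun s => \sum_t q s t * M x t.
  apply: functional_extensionality => s; apply/eqP; rewrite -subr_eq0; apply/eqP.
  set y := fun s => \sum_t q s t * M x t.
  have := hinj (fun s => x s - y s); apply => s'.
  by rewrite (symB _ _ _ hM) /y hq subrr.
have := kern_bound q (M x); by rewrite -ex.
Qed.

Lemma psd_bound M : psd_op M ->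
  exists K, 0 <= K /\ forall x, dotv (M x) (M x) <= K * dotv x (M x).
Proof.
move=> [hs hp]; have [K0 [K0p hK0]] := sym_bound hs.
have h1 : forall y, dotv y (M y) <= (1 + K0) * dotv y y.
  move=> y; have := dotv_ge0 (fun t => y t - M y t).
  rewrite dotvBl !dotvBr (dotvC (M y) y) => h.
  have := hK0 y; have := hp y; have := dotv_ge0 y; nra.
exists (1 + K0); split; first lra.
move=> x; set a := dotv (M x) (M x).
have ha : 0 <= a by exact: dotv_ge0.
have hb : dotv (M x) (M (M x)) <= (1 + K0) * a by exact: h1.
have hcs := psd_CS x (M x) (conj hs hp).
have e : dotv x (M (M x)) = a by rewrite -hs.
rewrite e in hcs.
have [a0|an0] := eqVneq a 0; first by rewrite a0 mulr_ge0 // ?hp; lra.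
have ap : 0 < a by rewrite lt0r an0.
have hx0 := hp x.
have : a ^+ 2 <= dotv x (M x) * ((1 + K0) * a).
  apply: le_trans hcs _; apply: ler_wpM2l => //.
move=> h; nra.
Qed.

Lemma sqrt_fix M S y : psd_op S -> (forall x s, S (S x) s = M x s) ->
  (forall s, M y s = y s) -> forall s, S y s = y s.
Proof.
move=> [hs hp] hSS hy.
set w := fun s => S y s - y s.
have hw : forall s, S w s + w s = 0.
  by move=> s; rewrite /w (symB _ _ _ hs) hSS hy; ring.
have : dotv w (S w) + dotv w w = 0.
  rewrite -dotvDr; have -> : (fun t => S w t + w t) = fun _ => 0.
    by apply: functional_extensionality.
  by rewrite dotvC dotv0l.
have := hp w; have := dotv_ge0 w => h1 h2 h3.
have h4 : dotv w w = 0 by lra.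
by move=> s; apply/eqP; rewrite -subr_eq0; apply/eqP; exact: dotv_eq0 h4 s.
Qed.

Lemma lam_min D lam : psd_op D -> is_lambda_min D lam ->
  forall x, lam * dotv x x <= dotv x (D x).
Proof.
move=> [hs hp] [[x0 [[t0 ht0] hx0]] hmin].
pose E : classical_sets.set R := fun mu => forall x, mu * dotv x x <= dotv x (D x).
have Ed : forall mu nu, E mu -> nu <= mu -> E nu.
  move=> mu nu hmu hnu x; apply: le_trans (hmu x).
  by apply: ler_wpM2r => //; exact: dotv_ge0.
have x0p : 0 < dotv x0 x0.
  rewrite lt0r dotv_ge0 andbT; apply/negP => /eqP h.
  by move/negP: ht0; apply; rewrite (dotv_eq0 h).
have hD0 : dotv x0 (D x0) = lam * dotv x0 x0.
  rewrite -dotvZr; congr dotv; apply: functional_extensionality => t; exact: hx0.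
have hsup : classical_sets.has_sup E.
  split; first by exists 0 => x; rewrite mul0r.
  exists lam => mu hmu; have := hmu x0; rewrite hD0.
  by rewrite ler_pM2r.
set m := reals.sup E.
have mE : E m.
  move=> x; have [x0'|xn0] := eqVneq (dotv x x) 0.
    by rewrite x0' mulr0 hp.
  have xp : 0 < dotv x x by rewrite lt0r xn0 dotv_ge0.
  rewrite leNgt; apply/negP => hlt.
  set r := dotv x (D x) / dotv x x.
  have hr : r < m by rewrite /r ltr_pdivrMr.
  have ep : 0 < m - r by rewrite subr_gt0.
  have [e He he] := reals.sup_adherent ep hsup.
  have := He x; rewrite -ler_pdivlMr // -/r; apply/negP; rewrite -ltNge.
  by move: he; rewrite opprB addrCA subrr addr0.
pose Em := fun x s => D x s - m * x s.
have hEs : symmetric_op Em.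
  move=> x y; rewrite /Em dotvBl dotvBr hs dotvZl dotvZr.
  by rewrite (dotvC x y) (dotvC y x).
have hEp : psd_op Em.
  split => // x; rewrite /Em dotvBr dotvZr subr_ge0; exact: mE.
have : ~ inj_op Em.
  move=> hinj.
  have [K1 [K1p hK1]] := sym_inv_bound hEs hinj.
  have [K2 [K2p hK2]] := psd_bound hEp.
  have cp : 0 < (K1 * K2 + 1)^-1 by rewrite invr_gt0; nra.
  have : E (m + (K1 * K2 + 1)^-1).
    move=> x; have h1 := hK1 x; have h2 := hK2 x.
    have h3 : dotv x (Em x) = dotv x (D x) - m * dotv x x.
      by rewrite /Em dotvBr dotvZr.
    have h4 := hp x; have h5 := mE x; have h6 := dotv_ge0 x.
    have h7 := dotv_ge0 (Em x).
    have h8 : dotv x x <= K1 * K2 * dotv x (Em x).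
      apply: le_trans h1 _; rewrite -mulrA; apply: ler_wpM2l => //.
    rewrite mulrDl h3 in h8 *.
    have h9 : (K1 * K2 + 1)^-1 * (K1 * K2 + 1) = 1 by rewrite mulVf //; nra.
    have h10 : 0 <= K1 * K2 by nra.
    nra.
  move=> /(reals.sup_upper_bound hsup) /=; rewrite -/m.
  by rewrite gerDl leNgt cp.
move=> hni.
have [x hx'] : exists x, ~ ((forall s, Em x s = 0) -> forall s, x s = 0).
  by apply: not_all_ex_not.
have [hx hnx] := imply_to_and _ _ hx'.
have [s hs0] : exists s, x s != 0.
  apply: NNPP => h; apply: hnx => s; apply: NNPP => hq; apply: h.
  by exists s; apply/eqP.
have : op_eigenvalue D m.
  exists x; split; first by exists s.
  by move=> t; have := hx t; rewrite /Em => /eqP; rewrite subr_eq0 => /eqP.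
move=> /hmin hlm y; apply: le_trans (mE y); apply: ler_wpM2r => //.
exact: dotv_ge0.
Qed.

Lemma mx_dlt (A : 'M[R]_N) i j : (A *m cvx (dlt R (ev j))) i 0 = A i j.
Proof.
rewrite mxE (bigD1 j) //= !mxE /dlt eqxx mulr1 big1 ?addr0 // => k hk.
by rewrite !mxE /dlt (inj_eq enum_val_inj) (negbTE hk) mulr0.
Qed.

Lemma mx_ext (A B : 'M[R]_N) : (forall x, A *m cvx x = B *m cvx x) -> A = B.
Proof.
move=> h; apply/matrixP => i j.
by rewrite -!mx_dlt h.
Qed.

Lemma comm_sqrt S C : psd_op S -> symmetric_op C ->
  (forall x s, S (S (C x)) s = C (S (S x)) s) -> forall x s, S (C x) s = C (S x) s.
Proof.
move=> [hs hp] hc hSSC.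
set Sm := mxo S; set Cm := mxo C.
have HSC : Sm *m Sm *m Cm = Cm *m Sm *m Sm.
  apply: mx_ext => x; rewrite -!mulmxA -!(cvxM _ hs) -!(cvxM _ hc) -!(cvxM _ hs).
  congr cvx; apply: functional_extensionality => s; exact: hSSC.
set X := Sm *m Cm - Cm *m Sm.
have hX1 : Sm *m X = - (X *m Sm).
  by rewrite /X mulmxBr mulmxBl !mulmxA HSC opprB.
have e1 : \tr (X *m Sm *m X) = - \tr (X *m Sm *m X).
  rewrite -{1}mulmxA hX1 mulmxN linearN /=; congr (- _).
  by rewrite mxtrace_mulC.
have htau : \tr (X *m Sm *m X) = 0.
  by move: e1; set tt := \tr _; lra.
have hXT : X^T = - X.
  by rewrite /X linearB /= !trmx_mul /Sm /Cm !mxo_tr // opprB.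
have htr2 : \tr (X^T *m Sm *m X) = 0.
  by rewrite hXT mulNmx mulNmx linearN /= htau oppr0.
pose xj j := fun t => X (rk t) j.
have hcol : forall j, (X^T *m Sm *m X) j j = dotv (xj j) (S (xj j)).
  move=> j; rewrite /dotv sum_enum mxE.
  under eq_bigr do rewrite mxE.
  under [RHS]eq_bigr do rewrite (mxoE _ _ hs) evK.
  under eq_bigr do rewrite mulr_suml.
  rewrite exchange_big /=; apply: eq_bigr => i _.
  rewrite [in RHS]mxE mulr_sumr; apply: eq_bigr => k _.
  rewrite [X^T _ _]mxE [Sm _ _]mxE [cvx _ _ _]mxE /xj !evK; ring.
have hSX : Sm *m X = 0.
  have h0 : forall j, (X^T *m Sm *m X) j j = 0.
    move=> j; move: htr2; rewrite /mxtrace => /psumr_eq0P; apply => //.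
    by move=> i _; rewrite hcol hp.
  apply/matrixP => i j; rewrite [RHS]mxE.
  have := psd_zero (conj hs hp) (eq_trans (esym (hcol j)) (h0 j)) (ev i).
  rewrite (mxoE _ _ hs) evK => <-.
  rewrite [LHS]mxE [RHS]mxE; apply: eq_bigr => k _; by rewrite [cvx _ _ _]mxE /xj evK.
have hXS : X *m Sm = 0.
  by apply/eqP; rewrite -oppr_eq0 -hX1 hSX.
have htr3 : \tr (X^T *m X) = 0.
  rewrite hXT mulNmx linearN /=; apply/eqP; rewrite oppr_eq0; apply/eqP.
  rewrite {2}/X mulmxBr linearB /= !mulmxA hXS mul0mx linear0 sub0r.
  by rewrite mxtrace_mulC mulmxA hSX mul0mx linear0 oppr0.
have hX0 : X = 0.
  have hnn : forall j, true -> 0 <= (X^T *m X) j j.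
    move=> j _; rewrite mxE sumr_ge0 // => k _.
    by rewrite [X^T _ _]mxE -expr2 sqr_ge0.
  have hdiag := psumr_eq0P hnn htr3.
  apply/matrixP => i j; rewrite [RHS]mxE.
  have := hdiag j isT; rewrite mxE => h2.
  have hnn2 : forall k, true -> 0 <= X^T j k * X k j.
    by move=> k _; rewrite [X^T _ _]mxE -expr2 sqr_ge0.
  have := psumr_eq0P hnn2 h2 (i:=i) isT.
  by rewrite [X^T _ _]mxE -expr2 => /eqP; rewrite sqrf_eq0 => /eqP.
have hSC : Sm *m Cm = Cm *m Sm by apply/eqP; rewrite -subr_eq0 -/X hX0.
move=> x s; rewrite (mxoE _ _ hs) (cvxM _ hc) (mxoE _ _ hc) (cvxM _ hs).
by rewrite !mulmxA hSC.
Qed.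

End Gen3.


Section Gen4.
Variables (R : realType) (T : finType).
Implicit Types (x y u v w h : T -> R).

Lemma normv_ge0 x : 0 <= normv x. Proof. exact: sqrtr_ge0. Qed.
Lemma normv_sq x : normv x ^+ 2 = dotv x x.
Proof. by rewrite sqr_sqrtr // dotv_ge0. Qed.

Lemma normvZ (a : R) x : 0 <= a -> normv (fun t => a * x t) = a * normv x.
Proof.
move=> a0; rewrite /normv dotvZl dotvZr mulrA -expr2 sqrtrM ?sqr_ge0 //.
by rewrite sqrtr_sqr ger0_norm.
Qed.

Lemma CSn x y : dotv x y <= normv x * normv y.
Proof.
have h := CS x y; rewrite -!normv_sq -exprMn in h.
have := normv_ge0 x; have := normv_ge0 y => h1 h2.
have hp : 0 <= normv x * normv y by apply: mulr_ge0.
case: (leP (dotv x y) 0) => [hn|hp']; first by apply: le_trans hn hp.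
by rewrite -(ler_pXn2r (_ : (0 < 2)%N)) ?nnegrE // ltW.
Qed.

Lemma le_eps (A B c : R) : 0 < c -> (forall eps, 0 < eps -> A - eps * c <= B) -> A <= B.
Proof.
move=> cp H; rewrite leNgt; apply/negP => hlt.
have ep : 0 < (A - B) / (2 * c) by rewrite divr_gt0 ?subr_gt0 // mulr_gt0.
have := H _ ep.
have -> : A - (A - B) / (2 * c) * c = A - (A - B) / 2 by field; rewrite gt_eqF.
lra.
Qed.

Lemma fo_cvx (f : (T -> R) -> R) g : convex_fun f -> has_gradient f g ->
  forall x y, f x + dotv (g x) (fun t => y t - x t) <= f y.
Proof.
move=> hc hg x y; set h := fun t => y t - x t.
have nh := normv_ge0 h.
suff H : forall eps, 0 < eps -> dotv (g x) h - eps * (normv h + 1) <= f y - f x.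
  have := le_eps (ltr_pwDr ltr01 nh) H; lra.
move=> eps ep; have [del dp hdel] := hg x eps ep.
set a := del / (del + normv h + 1).
have ap : 0 < a by rewrite divr_gt0 //; lra.
have a1 : a <= 1 by rewrite ler_pdivrMr ?mul1r; lra.
set h' := fun t => a * h t.
have nh' : normv h' = a * normv h by rewrite /h' normvZ // ltW.
have hlt : normv h' < del.
  rewrite nh' /a mulrC mulrA ltr_pdivrMr; last lra.
  nra.
have := hdel h' hlt; rewrite nh' => habs.
have e1 : (fun t => x t + h' t) = fun t => a * y t + (1 - a) * x t.
  by apply: functional_extensionality => t; rewrite /h' /h; ring.
have hcv := hc y x a (ltW ap) a1; rewrite -e1 in hcv.
have e2 : dotv (g x) h' = a * dotv (g x) h by rewrite /h' dotvZr.
rewrite e2 in habs.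
have hh := lerNnormlW habs.
have hh2 : a * (dotv (g x) h - eps * normv h) <= a * (f y - f x).
  move: hh hcv; set F1 := f _; lra.
rewrite ler_pM2l // in hh2; nra.
Qed.

Lemma le_lim (A B c : R) : 0 <= c ->
  (forall N : nat, (0 < N)%N -> A <= B + c / N%:R) -> A <= B.
Proof.
move=> c0 H; rewrite leNgt; apply/negP => hlt.
have d0 : 0 < A - B by rewrite subr_gt0.
set N := Num.bound (c / (A - B)).
have hN := archi_boundP (divr_ge0 c0 (ltW d0)); rewrite -/N in hN.
have N0 : (0 < N)%N.
  by rewrite lt0n; apply/eqP => e; move: hN; rewrite e ltNge divr_ge0 // ltW.
have Np : 0 < (N%:R : R) by rewrite ltr0n.
have := H N N0.
have : c / N%:R < A - B by rewrite ltr_pdivrMr // mulrC -ltr_pdivrMr.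
lra.
Qed.

Lemma sum_succ (N : nat) : \sum_(0 <= k < N) (k.+1)%:R = N%:R * (N%:R + 1) / 2 :> R.
Proof.
elim: N => [|N IH]; first by rewrite big_geq // mul0r mul0r.
by rewrite big_nat_recr //= IH -natr1; field.
Qed.

Lemma descent f g (L : R) : 0 <= L -> convex_fun f -> L_smooth L f g ->
  forall x y, f y <= f x + dotv (g x) (fun t => y t - x t)
                     + L / 2 * dotv (fun t => y t - x t) (fun t => y t - x t).
Proof.
move=> L0 hc [hg hL] x y; set h := fun t => y t - x t.
set G := dotv (g x) h; set q := dotv h h.
have q0 : 0 <= q by exact: dotv_ge0.
suff H : forall N : nat, (0 < N)%N -> f y - f x - G <= L / 2 * q + (L / 2 * q) / N%:R.
  have := le_lim (mulr_ge0 (divr_ge0 L0 (ler0n _ 2)) q0) H; lra.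
move=> N N0.
have Np : 0 < (N%:R : R) by rewrite ltr0n.
have Nn0 : (N%:R : R) != 0 by rewrite gt_eqF.
pose xk (k : nat) := fun t => x t + (k%:R / N%:R) * h t.
have x0 : xk 0%N = x by apply: functional_extensionality => t; rewrite /xk mul0r mul0r addr0.
have xN : xk N = y.
  by apply: functional_extensionality => t; rewrite /xk /h divff // mul1r; ring.
have tel : f y - f x = \sum_(0 <= k < N) (f (xk k.+1) - f (xk k)).
  by rewrite telescope_sumr // x0 xN.
have step : forall k, f (xk k.+1) - f (xk k) <= G / N%:R + L * q * (k.+1)%:R / (N%:R ^+ 2).
  move=> k.
  have h1 := fo_cvx hc hg (xk k.+1) (xk k).
  have e1 : (fun t => xk k t - xk k.+1 t) = fun t => (- N%:R^-1) * h t.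
    by apply: functional_extensionality => t; rewrite /xk -natr1; field.
  rewrite e1 dotvZr in h1.
  set r := (k.+1)%:R / (N%:R : R).
  have r0 : 0 <= r by rewrite divr_ge0.
  have h2 : dotv (g (xk k.+1)) h <= G + L * r * q.
    have e2 : dotv (g (xk k.+1)) h = G + dotv (subv (g (xk k.+1)) (g x)) h.
      by rewrite /subv dotvBl /G; ring.
    have h3 := CSn (subv (g (xk k.+1)) (g x)) h.
    have h4 := hL (xk k.+1) x.
    have e3 : subv (xk k.+1) x = fun t => r * h t.
      by apply: functional_extensionality => t; rewrite /subv /xk /r; field.
    rewrite e3 normvZ // in h4.
    have nq : normv h * normv h = q by rewrite -expr2 normv_sq.
    have := normv_ge0 h => nh0.
    have h5 : normv (subv (g (xk k.+1)) (g x)) * normv h <= L * (r * normv h) * normv h.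
      by apply: ler_wpM2r.
    have h6 : L * (r * normv h) * normv h = L * r * q by rewrite -nq; ring.
    rewrite e2; suff : dotv (subv (g (xk k.+1)) (g x)) h <= L * r * q by lra.
    by apply: le_trans h3 _; rewrite -h6.
  have : - (- N%:R^-1 * dotv (g (xk k.+1)) h) <= N%:R^-1 * (G + L * r * q).
    by rewrite mulNr opprK; apply: ler_wpM2l => //; rewrite invr_ge0 ltW.
  have -> : N%:R^-1 * (G + L * r * q) = G / N%:R + L * q * (k.+1)%:R / (N%:R ^+ 2).
    by rewrite /r; field.
  lra.
have hs : f y - f x <= \sum_(0 <= k < N) (G / N%:R + L * q * (k.+1)%:R / (N%:R ^+ 2)).
  by rewrite tel; apply: ler_sum => k _; exact: step.
rewrite big_split /= sumr_const_nat subn0 in hs.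
clearbody q G.
have e4 : \sum_(0 <= i < N) (L * q * (i.+1)%:R / N%:R ^+ 2)
          = L * q / N%:R ^+ 2 * \sum_(0 <= i < N) (i.+1)%:R.
  by rewrite mulr_sumr; apply: eq_bigr => i _; field.
rewrite e4 sum_succ in hs.
have e5 : G / N%:R *+ N + L * q / N%:R ^+ 2 * (N%:R * (N%:R + 1) / 2)
          = G + L / 2 * q + L / 2 * q / N%:R.
  by rewrite -mulr_natr; field.
rewrite e5 in hs; lra.
Qed.

End Gen4.


Section Main.
Variables (R : realType) (T : finType).
Implicit Types (x y u v w z : T -> R) (M : (T -> R) -> (T -> R)).

Fact vsub_key : unit. Proof. exact: tt. Qed.
Fact vadd_key : unit. Proof. exact: tt. Qed.
Fact vscal_key : unit. Proof. exact: tt. Qed.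
Definition vsub x y : T -> R := locked_with vsub_key (fun s => x s - y s).
Definition vadd x y : T -> R := locked_with vadd_key (fun s => x s + y s).
Definition vscal (a : R) x : T -> R := locked_with vscal_key (fun s => a * x s).

Lemma vsubE x y s : vsub x y s = x s - y s. Proof. by rewrite /vsub locked_withE. Qed.
Lemma vaddE x y s : vadd x y s = x s + y s. Proof. by rewrite /vadd locked_withE. Qed.
Lemma vscalE a x s : vscal a x s = a * x s. Proof. by rewrite /vscal locked_withE. Qed.

Lemma vext x y : (forall s, x s = y s) -> x = y.
Proof. exact: functional_extensionality. Qed.

Lemma vsubF x y : vsub x y = fun s => x s - y s.
Proof. by apply: vext => s; rewrite vsubE. Qed.
Lemma vaddF x y : vadd x y = fun s => x s + y s.
Proof. by apply: vext => s; rewrite vaddE. Qed.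
Lemma vscalF a x : vscal a x = fun s => a * x s.
Proof. by apply: vext => s; rewrite vscalE. Qed.

Lemma dsubl x y z : dotv (vsub x y) z = dotv x z - dotv y z.
Proof. by rewrite vsubF; exact: dotvBl. Qed.
Lemma dsubr x y z : dotv z (vsub x y) = dotv z x - dotv z y.
Proof. by rewrite vsubF; exact: dotvBr. Qed.
Lemma daddl x y z : dotv (vadd x y) z = dotv x z + dotv y z.
Proof. by rewrite vaddF; exact: dotvDl. Qed.
Lemma daddr x y z : dotv z (vadd x y) = dotv z x + dotv z y.
Proof. by rewrite vaddF; exact: dotvDr. Qed.
Lemma dscall a x z : dotv (vscal a x) z = a * dotv x z.
Proof. by rewrite vscalF; exact: dotvZl. Qed.
Lemma dscalr a x z : dotv z (vscal a x) = a * dotv z x.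
Proof. by rewrite vscalF; exact: dotvZr. Qed.

Lemma Msub M x y : symmetric_op M -> M (vsub x y) = vsub (M x) (M y).
Proof. by move=> hM; apply: vext => s; rewrite vsubF (symB _ _ _ hM) vsubE. Qed.
Lemma Madd M x y : symmetric_op M -> M (vadd x y) = vadd (M x) (M y).
Proof. by move=> hM; apply: vext => s; rewrite vaddF (symD _ _ _ hM) vaddE. Qed.
Lemma Mscal M a x : symmetric_op M -> M (vscal a x) = vscal a (M x).
Proof. by move=> hM; apply: vext => s; rewrite vscalF (symZ _ _ _ hM) vscalE. Qed.
Lemma Mzero M : symmetric_op M -> M (fun _ => 0) = fun _ => 0.
Proof. by move=> hM; apply: vext => s; rewrite (sym0 _ hM). Qed.

Fixpoint sigr (C : (T -> R) -> (T -> R)) (h : nat -> T -> R) (t : nat) : T -> R :=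
  match t with
  | 0 => fun _ => 0
  | t'.+1 => vadd (sigr C h t') (vsub (h t') (C (sigr C h t')))
  end.

Lemma main_abstract (B C D S : (T -> R) -> (T -> R)) (F : (T -> R) -> R)
  (G : (T -> R) -> (T -> R)) (L lam gamma : R) (ystar w : T -> R)
  (ys zs : nat -> T -> R) :
  symmetric_op B -> psd_op C -> psd_op D -> psd_op S ->
  (forall x s, S (S x) s = B x s) ->
  (forall x s, S (C x) s = C (S x) s) ->
  (forall x s, B (C x) s = C (B x) s) ->
  (forall x, 0 <= dotv x (fun s => x s - 2^-1 * C x s - S (D (S x)) s)) ->
  (forall x, lam * dotv x x <= dotv x (D x)) ->
  0 < gamma -> gamma * L <= lam ->
  (forall x y, F x + dotv (G x) (vsub y x) <= F y) ->
  (forall x y, F y <= F x + dotv (G x) (vsub y x) + L / 2 * dotv (vsub y x) (vsub y x)) ->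
  (forall s, S ystar s = ystar s) -> (forall s, D ystar s = ystar s) ->
  (forall s, C ystar s = 0) ->
  (forall s, G ystar s = C w s) ->
  (forall s, zs 0%N s = 0) ->
  (forall k s, ys k.+1 s = B (D (ys k)) s - gamma * B (G (ys k)) s - zs k s) ->
  (forall k s, zs k.+1 s = zs k s + C (ys k.+1) s) ->
  exists K1 K2, forall k, (0 < k)%N ->
    \sum_(1 <= t < k.+1) (F (ys t) - F ystar - dotv (G ystar) (vsub (ys t) ystar)) <= K1
    /\ dotv (zs k) (zs k) <= K2.
Proof.
move=> hB [hCs hCp] [hDs hDp] [hSs hSp] hSS hSC hBC hv hlam hg hgl hcvx hdesc
  hSy hDy hCy hGw hz0 hy hz.
set Gs := G ystar.
pose h t := vsub (D (ys t)) (vscal gamma (G (ys t))).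
pose sg := sigr C h.
pose eta t := vsub (h t) (C (sg t)).
have sgS : forall t, sg t.+1 = vadd (sg t) (eta t) by [].
have C0 : C (fun _ => 0) = fun _ => 0 by exact: Mzero.
have B0 : B (fun _ => 0) = fun _ => 0 by exact: Mzero.
have hyB : forall t, zs t = B (C (sg t)) -> ys t.+1 = B (eta t).
  move=> t hzt; apply: vext => s; rewrite hy hzt.
  by rewrite /eta (Msub _ _ hB) /h (Msub _ _ hB) (Mscal _ _ hB) !vsubE vscalE.
have hzB : forall t, zs t = B (C (sg t)).
  elim => [|t IH].
    by apply: vext => s; rewrite hz0 /= C0 B0.
  apply: vext => s; rewrite hz (hyB t IH) IH -hBC sgS (Madd _ _ hCs) (Madd _ _ hB).
  by rewrite !vaddE.
have hyB' : forall t, ys t.+1 = B (eta t) by move=> t; exact: hyB.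
pose a t := S (eta t).
have hya : forall t, ys t.+1 = S (a t).
  by move=> t; rewrite hyB'; apply: vext => s; rewrite hSS.
pose sh t := vadd (S (sg t)) (vscal gamma (S w)).
have shS : forall t, sh t.+1 = vadd (sh t) (a t).
  move=> t; apply: vext => s; rewrite /sh sgS (Madd _ _ hSs) !vaddE /a; ring.
pose d t := vsub (a t) ystar.
pose M x := S (D (S x)).
have hMs : symmetric_op M.
  by move=> x y; rewrite /M hSs hDs hSs.
have hMy : M ystar = ystar.
  apply: vext => s; rewrite /M.
  have -> : S ystar = ystar by apply: vext.
  have -> : D ystar = ystar by apply: vext.
  exact: hSy.
have hSGs : S Gs = S (C w) by congr S; apply: vext.
have hrec : forall t, d t.+1 =
    vsub (vsub (M (d t)) (vscal gamma (vsub (S (G (ys t.+1))) (S Gs)))) (C (sh t.+1)).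
  move=> t; apply: vext => s.
  rewrite /d /a {1}/eta /h (Msub _ _ hSs) (Msub _ _ hSs) (Mscal _ _ hSs).
  rewrite (Msub _ _ hMs) hMy /M -(hya t) hSGs.
  have -> : S (C (sg t.+1)) = vsub (C (sh t.+1)) (vscal gamma (S (C w))).
    apply: vext => s'; rewrite /sh (Madd _ _ hCs) (Mscal _ _ hCs) hSC.
    rewrite !vsubE !vaddE !vscalE -(hSC w); ring.
  rewrite !(vsubE, vscalE, vaddE); ring.
pose ell y := F y - F ystar - dotv Gs (vsub y ystar).
have ell0 : forall y, 0 <= ell y.
  by move=> y; have := hcvx ystar y; rewrite /ell -/Gs; lra.
have Mpos : forall x, 0 <= dotv x (M x) by move=> x; rewrite /M -hSs; exact: hDp.
pose W t := 2^-1 * dotv (d t) (M (d t)) + 2^-1 * dotv (sh t.+1) (C (sh t.+1)).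
have W0 : forall t, 0 <= W t.
  move=> t; rewrite /W; have := Mpos (d t); have := hCp (sh t.+1); lra.
have hstep : forall t, gamma * ell (ys t.+2) <= W t - W t.+1.
  move=> t.
  set y1 := ys t.+1; set y2 := ys t.+2; set u := d t; set v := d t.+1.
  have e2 : vsub y2 ystar = S v.
    by apply: vext => s; rewrite /y2 hya /v /d (Msub _ _ hSs) !vsubE hSy.
  have e4 : vsub y2 y1 = S (vsub v u).
    apply: vext => s; rewrite /y2 /y1 !hya /v /u /d !(Msub _ _ hSs) !vsubE; ring.
  have E1 : ell y2 <= dotv (vsub (G y1) Gs) (vsub y2 ystar)
                      + L / 2 * dotv (vsub y2 y1) (vsub y2 y1).
    have h1 := hcvx y1 ystar; have h2 := hdesc y1 y2.
    move: h1 h2; set Q := dotv (vsub y2 y1) (vsub y2 y1).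
    rewrite /ell !dsubr !dsubl; lra.
  have E2 : dotv (vsub (G y1) Gs) (vsub y2 ystar) = dotv (vsub (S (G y1)) (S Gs)) v.
    by rewrite e2 -hSs (Msub _ _ hSs).
  have E3 : gamma * dotv (vsub (S (G y1)) (S Gs)) v
            = dotv (vsub (vsub (M u) v) (C (sh t.+1))) v.
    rewrite -dscall; congr dotv; apply: vext => s.
    have := congr1 (fun f => f s) (hrec t); rewrite -/u -/v -/y1 !vsubE !vscalE => ->.
    ring.
  set Dl := vsub v u.
  have E4 : gamma * L * dotv (S Dl) (S Dl) <= dotv Dl (M Dl).
    have -> : dotv Dl (M Dl) = dotv (S Dl) (D (S Dl)) by rewrite /M hSs.
    apply: le_trans (hlam (S Dl)).
    by apply: ler_wpM2r => //; exact: dotv_ge0.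
  have E6 : 0 <= dotv v v - 2^-1 * dotv v (C v) - dotv v (M v).
    have := hv v.
    have -> : (fun s => v s - 2^-1 * C v s - S (D (S v)) s)
              = vsub (vsub v (vscal 2^-1 (C v))) (M v).
      by apply: vext => s; rewrite !vsubE vscalE.
    by rewrite !dsubr dscalr.
  have hsh : sh t.+2 = vadd (sh t.+1) (vadd v ystar).
    rewrite shS; congr vadd; apply: vext => s; rewrite /v /d vaddE vsubE; ring.
  have hCsh : C (sh t.+2) = vadd (C (sh t.+1)) (C v).
    rewrite hsh !(Madd _ _ hCs); congr vadd; apply: vext => s.
    by rewrite !vaddE hCy addr0.
  have hyC : forall x, dotv ystar (C x) = 0.
    move=> x; rewrite -hCs; have -> : C ystar = fun _ => 0 by apply: vext.
    exact: dotv0l.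
  have hMD : M Dl = vsub (M v) (M u) by rewrite /Dl (Msub _ _ hMs).
  have eW : W t - W t.+1 = 2^-1 * dotv u (M u) - 2^-1 * dotv v (M v)
        - dotv (C (sh t.+1)) v - 2^-1 * dotv v (C v).
    rewrite /W -/u -/v hCsh hsh (daddl (sh t.+1) (vadd v ystar)) (daddl v ystar).
    rewrite (daddr (C (sh t.+1)) (C v) (sh t.+1)) (daddr (C (sh t.+1)) (C v) v).
    rewrite (daddr (C (sh t.+1)) (C v) ystar) !hyC.
    rewrite (dotvC v (C (sh t.+1))) hCs; lra.
  have eD : dotv Dl (M Dl) = dotv v (M v) - 2 * dotv (M u) v + dotv u (M u).
    rewrite hMD /Dl (dsubl v u) (dsubr (M v) (M u) v) (dsubr (M v) (M u) u).
    rewrite (dotvC v (M u)) -(hMs u v); ring.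
  have eE3 : dotv (vsub (vsub (M u) v) (C (sh t.+1))) v
             = dotv (M u) v - dotv v v - dotv (C (sh t.+1)) v.
    by rewrite (dsubl (vsub (M u) v) (C (sh t.+1))) (dsubl (M u) v).
  rewrite e4 in E1; rewrite E2 in E1.
  have E1' : gamma * ell y2 <= gamma * dotv (vsub (S (G y1)) (S Gs)) v
      + 2^-1 * (gamma * L * dotv (S Dl) (S Dl)).
    have := ler_wpM2l (ltW hg) E1; rewrite mulrDr => hh; apply: le_trans hh _.
    by rewrite le_eqVlt; apply/orP; left; apply/eqP; field.
  rewrite E3 eE3 in E1'; rewrite eD in E4; rewrite eW.
  set q := gamma * L * dotv (S Dl) (S Dl) in E1' E4.
  lra.
have Wdec : forall t, W t.+1 <= W t.
  move=> t; have := hstep t; have := ell0 (ys t.+2) => h1.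
  have : 0 <= gamma * ell (ys t.+2) by apply: mulr_ge0 => //; exact: ltW.
  lra.
have Wle : forall t, W t <= W 0%N.
  elim => [|t IH] //; exact: le_trans (Wdec t) IH.
have hsum : forall k, gamma * \sum_(2 <= t < k.+2) ell (ys t) <= W 0%N - W k.
  elim => [|k IH]; first by rewrite big_geq // mulr0 subrr.
  rewrite big_nat_recr //= mulrDr.
  have := hstep k; lra.
have hSCsg : forall t, S (C (sg t)) = vsub (C (sh t)) (vscal gamma (S (C w))).
  move=> t; apply: vext => s'; rewrite /sh (Madd _ _ hCs) (Mscal _ _ hCs) hSC.
  rewrite !(vsubE, vaddE, vscalE) -(hSC w); ring.
have [KS [KSp hKS]] := sym_bound hSs.
have [KC [KCp hKC]] := psd_bound (conj hCs hCp).
set c := vscal gamma (S (C w)).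
exists (ell (ys 1%N) + W 0%N / gamma).
exists (KS * (2 * (KC * (2 * W 0%N)) + 2 * dotv c c)).
move=> [//|k] _; split.
  rewrite big_ltn //.
  have := hsum k; have := W0 k => h1 h2.
  have h3 : \sum_(2 <= t < k.+2) ell (ys t) <= W 0%N / gamma.
    rewrite ler_pdivlMr // mulrC; lra.
  rewrite -/Gs; apply: lerD => //.
have ez : zs k.+1 = S (vsub (C (sh k.+1)) c).
  by rewrite hzB -(hSCsg k.+1); apply: vext => s; rewrite hSS.
rewrite ez; apply: le_trans (hKS _) _; apply: ler_wpM2l => //.
set P := C (sh k.+1).
have hb : dotv (vsub P c) (vsub P c) <= 2 * dotv P P + 2 * dotv c c.
  have := dotv_ge0 (vadd P c).
  rewrite (daddl P c) (daddr P c P) (daddr P c c).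
  rewrite (dsubl P c) (dsubr P c P) (dsubr P c c) (dotvC c P); lra.
apply: le_trans hb _; apply: lerD => //; apply: ler_wpM2l => //.
apply: le_trans (hKC _) _; apply: ler_wpM2l => //.
have := Wle k; have := Mpos (d k); rewrite /W; lra.
Qed.

End Main.


Lemma sum_sigT (R : realType) (I : finType) (T_ : I -> finType)
  (F : {i : I & T_ i} -> R) :
  \sum_s F s = \sum_i \sum_(x : T_ i) F (Tagged T_ x).
Proof.
rewrite (partition_big (fun s => tag s) predT) //=.
apply: eq_bigr => i _; rewrite [RHS](big_tag (fun i (x : T_ i) => F (Tagged T_ x)) i).
apply: eq_big => s; first by [].
by move=> /eqP e; rewrite (untagE _ _ e) etaggedK.
Qed.


Section Net.
Variables (R : realType) (P I : nat) (n : 'I_P -> nat) (V : 'I_P -> {set 'I_I}).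
Local Notation Sx := (Sidx n V).
Local Notation Yx := (Yidx n).

Lemma sumS (F : Sx -> R) :
  \sum_s F s = \sum_p \sum_(j : 'I_#|V p|) \sum_(c : 'I_(n p)) F (existT _ p (j, c)).
Proof.
rewrite (sum_sigT F); apply: eq_bigr => p _.
by rewrite pair_big /=; apply: eq_bigr => -[j c] _.
Qed.

Lemma sumY (F : Yx -> R) :
  \sum_u F u = \sum_p \sum_(c : 'I_(n p)) F (existT _ p c).
Proof. exact: sum_sigT. Qed.

Lemma agent_inj p : injective (fun j : 'I_#|V p| => agent_of j).
Proof. exact: enum_val_inj. Qed.

Lemma pick_sum p (G : 'I_I -> 'I_#|V p| -> R) :
  \sum_i (match [pick j : 'I_#|V p| | agent_of j == i] with
          | Some j => G i j | None => 0 end)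
  = \sum_j G (agent_of j) j.
Proof.
have -> : \sum_j G (agent_of j) j = \sum_j \sum_i (if agent_of j == i then G i j else 0).
  apply: eq_bigr => j _; rewrite (bigD1 (agent_of j)) //= eqxx big1 ?addr0 //.
  by move=> i /negbTE; rewrite eq_sym => ->.
rewrite exchange_big /=; apply: eq_bigr => i _.
case: pickP => [j hj | hn].
  rewrite (bigD1 j) //= hj big1 ?addr0 // => j' hj'.
  case: ifP => // /eqP e; move/eqP: hj => e'.
  by move/negP: hj'; rewrite (agent_inj (etrans e (esym e'))) eqxx.
by rewrite big1 // => j _; rewrite hn.
Qed.

Lemma loc_sum (Phi : 'I_I -> Yx -> R -> R) (H : Sx -> R) :
  (forall i u, Phi i u 0 = 0) ->
  \sum_i \sum_u Phi i u (loc H i u)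
  = \sum_(s : Sx) (let: existT p (j, c) := s in
            Phi (agent_of j) (existT _ p c) (H s)).
Proof.
move=> h0; rewrite sumS.
under eq_bigr do rewrite sumY.
rewrite exchange_big /=; apply: eq_bigr => p _.
rewrite exchange_big /=.
rewrite (eq_bigr (fun c => \sum_j Phi (agent_of j) (existT _ p c) (H (existT _ p (j, c))))).
  by rewrite exchange_big.
move=> c _; rewrite -(pick_sum (fun i j => Phi i (existT _ p c) (H (existT _ p (j, c))))).
apply: eq_bigr => i _ /=.
by case: pickP => [j _|_]; rewrite ?h0.
Qed.

End Net.
Section Net2.
Variables (R : realType) (P I : nat) (n : 'I_P -> nat) (V : 'I_P -> {set 'I_I}).
Local Notation Sx := (Sidx n V).
Local Notation Yx := (Yidx n).
Lemma loc_sub (y x : Sx -> R) i :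
  loc (fun s => y s - x s) i = fun u => loc y i u - loc x i u.
Proof.
apply: functional_extensionality => -[p c] /=.
by case: pickP => [j _|_] //; rewrite subrr.
Qed.

Lemma loc_dot (gg : 'I_I -> Yx -> R) (H : Sx -> R) :
  \sum_i dotv (gg i) (loc H i)
  = dotv (fun s : Sx => let: existT p (j, c) := s in gg (agent_of j) (existT _ p c)) H.
Proof.
rewrite /dotv (loc_sum (Phi:=fun i u r => gg i u * r)) => [|i u]; last by rewrite mulr0.
by apply: eq_bigr => -[p [j c]] _.
Qed.

Lemma loc_norm (H : Sx -> R) : \sum_i dotv (loc H i) (loc H i) = dotv H H.
Proof.
rewrite /dotv (loc_sum (Phi:=fun i u r => r * r)) => [|i u]; last by rewrite mulr0.
by apply: eq_bigr => -[p [j c]] _.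
Qed.

Lemma Fobj_cvx (f : 'I_I -> (Yx -> R) -> R) (g : 'I_I -> (Yx -> R) -> (Yx -> R)) :
  (forall i, convex_fun (f i)) -> (forall i, has_gradient (f i) (g i)) ->
  forall x y : Sx -> R,
    fobj f x + dotv (gradS g x) (fun s => y s - x s) <= fobj f y.
Proof.
move=> hc hg x y.
have -> : dotv (gradS g x) (fun s => y s - x s)
          = \sum_i dotv (g i (loc x i)) (loc (fun s => y s - x s) i).
  rewrite loc_dot; congr dotv; apply: functional_extensionality => -[p [j c]] //.
rewrite /fobj -big_split /=; apply: ler_sum => i _.
rewrite loc_sub; exact: fo_cvx.
Qed.

Lemma Fobj_desc (f : 'I_I -> (Yx -> R) -> R) (g : 'I_I -> (Yx -> R) -> (Yx -> R)) L :
  0 <= L -> (forall i, convex_fun (f i)) -> (forall i, L_smooth L (f i) (g i)) ->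
  forall x y : Sx -> R,
    fobj f y <= fobj f x + dotv (gradS g x) (fun s => y s - x s)
                + L / 2 * dotv (fun s => y s - x s) (fun s => y s - x s).
Proof.
move=> L0 hc hL x y.
have -> : dotv (gradS g x) (fun s => y s - x s)
          = \sum_i dotv (g i (loc x i)) (loc (fun s => y s - x s) i).
  rewrite loc_dot; congr dotv; apply: functional_extensionality => -[p [j c]] //.
rewrite -loc_norm mulr_sumr /fobj -!big_split /=; apply: ler_sum => i _.
rewrite loc_sub; exact: descent.
Qed.

Lemma lift_cons (u : Yx -> R) : consensus (Defs.lift (V:=V) u).
Proof. by []. Qed.

Definition cbase (v : Sx -> R) : Yx -> R := fun u =>
  let: existT p c := u in
  match [pick j : 'I_#|V p|] with Some j => v (existT _ p (j, c)) | None => 0 end.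

Lemma cons_lift (v : Sx -> R) : consensus v -> v = Defs.lift (cbase v).
Proof.
move=> hv; apply: functional_extensionality => -[p [j c]] /=.
by case: pickP => [j' _|hn]; [exact: hv | have := hn j].
Qed.

Lemma agent_ex (i : 'I_I) p : i \in V p -> exists j : 'I_#|V p|, agent_of j = i.
Proof. by move=> hi; exists (enum_rank_in hi i); rewrite /agent_of enum_rankK_in. Qed.

Lemma fobj_lift (Nb : 'I_I -> {set 'I_P}) (f : 'I_I -> (Yx -> R) -> R) (u : Yx -> R) :
  (forall (i : 'I_I) (p : 'I_P), p \in Nb i -> i \in V p) ->
  (forall (i : 'I_I) (x x' : Yx -> R),
     (forall (p : 'I_P) (c : 'I_(n p)), p \in Nb i ->
        x (existT _ p c) = x' (existT _ p c)) -> f i x = f i x') ->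
  fobj f (Defs.lift (V:=V) u) = \sum_i f i u.
Proof.
move=> hNV hdep; apply: eq_bigr => i _; apply: hdep => p c hp /=.
case: pickP => [j _|hn] //.
have [j hj] := agent_ex (hNV _ _ hp).
by have := hn j; rewrite hj eqxx.
Qed.

Lemma Pi_par_dot (x y : Sx -> R) :
  dotv (Pi_par x) y = \sum_p \sum_(c : 'I_(n p))
    (#|V p|%:R)^-1 * (\sum_(j : 'I_#|V p|) x (existT _ p (j, c)))
                   * (\sum_(j : 'I_#|V p|) y (existT _ p (j, c))).
Proof.
rewrite /dotv sumS; apply: eq_bigr => p _; rewrite exchange_big /=.
by apply: eq_bigr => c _; rewrite -mulr_sumr.
Qed.

Lemma Pi_par_sym : symmetric_op (Pi_par (R:=R) (n:=n) (V:=V)).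
Proof.
move=> x y; rewrite Pi_par_dot dotvC Pi_par_dot.
by apply: eq_bigr => p _; apply: eq_bigr => c _; ring.
Qed.

Lemma Pi_par_cons (x : Sx -> R) : consensus (Pi_par x).
Proof. by []. Qed.

Lemma Pi_par_fix (x : Sx -> R) : consensus x -> forall s, Pi_par x s = x s.
Proof.
move=> hx [p [j c]] /=.
rewrite (eq_bigr (fun _ => x (existT _ p (j, c)))); last by move=> j' _; exact: hx.
rewrite sumr_const card_ord -[x _ *+ _]mulr_natl mulrA mulVf ?mul1r //.
by rewrite pnatr_eq0 -lt0n; apply: leq_ltn_trans (ltn_ord j).
Qed.

Lemma Pi_par_psd : psd_op (Pi_par (R:=R) (n:=n) (V:=V)).
Proof.
split; first exact: Pi_par_sym.
move=> x; rewrite dotvC Pi_par_dot; apply: sumr_ge0 => p _; apply: sumr_ge0 => c _.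
by rewrite -mulrA mulr_ge0 ?invr_ge0 ?ler0n // -expr2 sqr_ge0.
Qed.

Lemma grad_orth (Nb : 'I_I -> {set 'I_P}) (f : 'I_I -> (Yx -> R) -> R)
  (g : 'I_I -> (Yx -> R) -> (Yx -> R)) L (ystar : Yx -> R) :
  (forall (i : 'I_I) (p : 'I_P), p \in Nb i -> i \in V p) ->
  (forall (i : 'I_I) (x x' : Yx -> R),
     (forall (p : 'I_P) (c : 'I_(n p)), p \in Nb i ->
        x (existT _ p c) = x' (existT _ p c)) -> f i x = f i x') ->
  0 <= L -> (forall i, convex_fun (f i)) -> (forall i, L_smooth L (f i) (g i)) ->
  (forall y : Yx -> R, \sum_i f i ystar <= \sum_i f i y) ->
  forall v : Sx -> R, consensus v -> dotv (gradS g (Defs.lift (V:=V) ystar)) v = 0.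
Proof.
move=> hNV hdep L0 hc hL hopt v hv.
set a := dotv (gradS g (Defs.lift ystar)) v.
set b := dotv v v.
have H : forall t, 0 <= t * a + t ^+ 2 * (L / 2 * b).
  move=> t.
  pose y := fun s => Defs.lift (V:=V) ystar s + t * v s.
  have hy : y = Defs.lift (fun u => ystar u + t * cbase v u).
    apply: functional_extensionality => s; rewrite /y {1}(cons_lift hv).
    by case: s => p [j c].
  have h1 := Fobj_desc L0 hc hL (Defs.lift ystar) y.
  have e1 : (fun s => y s - Defs.lift (V:=V) ystar s) = fun s => t * v s.
    by apply: functional_extensionality => s; rewrite /y; ring.
  rewrite e1 dotvZr dotvZl dotvZr -/a -/b in h1.
  have h2 : fobj f (Defs.lift (V:=V) ystar) <= fobj f y.
    by rewrite hy !(fobj_lift _ hNV hdep); exact: hopt.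
  have e2 : L / 2 * (t * (t * b)) = t ^+ 2 * (L / 2 * b) by ring.
  lra.
have := quad_disc (a := 0) (b := a / 2) (c := L / 2 * b).
have hcp : 0 <= L / 2 * b by apply: mulr_ge0; [lra | exact: dotv_ge0].
move=> /(_ hcp) hq.
have : (a / 2) ^+ 2 <= 0 * (L / 2 * b).
  apply: hq => t; have := H t.
  have -> : 0 + 2 * t * (a / 2) + t ^+ 2 * (L / 2 * b) = t * a + t ^+ 2 * (L / 2 * b).
    by field.
  by [].
rewrite mul0r => h; apply/eqP; have : (a / 2) ^+ 2 == 0 by rewrite eq_le h sqr_ge0.
by rewrite sqrf_eq0 mulf_eq0 invr_eq0 pnatr_eq0 orbF.
Qed.

End Net2.

Unset Implicit Arguments.
Set Strict Implicit.


Lemma sym_sumnat {R : realType} {T : finType} {M : (T -> R) -> (T -> R)}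
  (F : nat -> T -> R) m k s : symmetric_op M ->
  M (fun s => \sum_(m <= t < k) F t s) s = \sum_(m <= t < k) M (F t) s.
Proof.
move=> hM; rewrite (symK _ _ hM).
under eq_bigr do rewrite mulr_sumr.
rewrite exchange_big /=; apply: eq_bigr => t _.
by rewrite (symK _ _ hM).
Qed.

Lemma pd_psd {R : realType} {T : finType} {M : (T -> R) -> (T -> R)} :
  pd_op M -> psd_op M.
Proof.
move=> [hs hp]; split => // x.
case: (Classical_Prop.classic (exists t, x t != 0)) => [h|h]; first exact: ltW (hp x h).
have -> : x = fun _ => 0.
  apply: functional_extensionality => t; apply/eqP; apply: NNPP => ht.
  by apply: h; exists t; apply/negP.
by rewrite dotv0l.
Qed.

Lemma dotv_sumnat {R : realType} {T : finType} (a : T -> R) (F : nat -> T -> R) m k :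
  \sum_(m <= t < k) dotv a (F t) = dotv a (fun s => \sum_(m <= t < k) F t s).
Proof.
rewrite /dotv exchange_big /=; apply: eq_bigr => s _; by rewrite mulr_sumr.
Qed.

Theorem theorem3 (R : realType) (P I : nat) (n : 'I_P -> nat)
  (Nb : 'I_I -> {set 'I_P}) (V : 'I_P -> {set 'I_I})
  (f : 'I_I -> (Yidx n -> R) -> R) (g : 'I_I -> (Yidx n -> R) -> (Yidx n -> R))
  (L : R)
  (Ap Bp Cp Dp : forall p : 'I_P, 'M[R]_#|V p|)
  (sqB : (Sidx n V -> R) -> (Sidx n V -> R))
  (lam : R) (ystar : Yidx n -> R) (gamma : R)
  (ys zs : nat -> Sidx n V -> R) :
  (forall (i : 'I_I) (p : 'I_P), p \in Nb i -> i \in V p) ->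
  (forall (i : 'I_I) (x x' : Yidx n -> R),
     (forall (p : 'I_P) (c : 'I_(n p)), p \in Nb i ->
        x (existT _ p c) = x' (existT _ p c)) -> f i x = f i x') ->
  0 < L ->
  (forall i, convex_fun (f i)) ->
  (forall i, L_smooth L (f i) (g i)) ->
  (forall y s, bdiag n Ap y s = bdiag n Bp (bdiag n Dp y) s) ->
  psd_op (bdiag n Bp) ->
  pd_op (bdiag n Dp) ->
  (forall y, consensus y -> forall s, bdiag n Dp y s = y s /\ bdiag n Bp y s = y s) ->
  psd_op (bdiag n Cp) ->
  (forall y, (forall s, bdiag n Cp y s = 0) <-> consensus y) ->
  (forall y s, bdiag n Bp (bdiag n Cp y) s = bdiag n Cp (bdiag n Bp y) s) ->
  psd_op sqB ->
  (forall y s, sqB (sqB y) s = bdiag n Bp y s) ->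
  psd_op (fun y s => y s - 2^-1 * bdiag n Cp y s - sqB (bdiag n Dp (sqB y)) s) ->
  (forall y : Yidx n -> R, \sum_i f i ystar <= \sum_i f i y) ->
  is_lambda_min (bdiag n Dp) lam ->
  0 < gamma -> gamma < lam / L ->
  (forall s, zs 0%N s = 0) ->
  (forall k s, ys k.+1 s =
     bdiag n Ap (ys k) s - gamma * bdiag n Bp (gradS g (ys k)) s - zs k s) ->
  (forall k s, zs k.+1 s = zs k s + bdiag n Cp (ys k.+1) s) ->
  exists K : R, forall k : nat, (0 < k)%N ->
    merit f g ystar (yavg ys k) <= K / k%:R.
Proof.
move=> hNV hdep Lp hcvx hsm hA hBpsd hDpd hcons hCpsd hCnull hBC hSpsd hSS hv
  hopt hlam g0 gl hz0 hy hz.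
set ys0 := Defs.lift (V:=V) ystar.
set Gs := gradS g ys0.
have hDpsd : psd_op (bdiag n Dp) := pd_psd hDpd.
have [hBs _] := hBpsd; have [hCs hCp] := hCpsd; have [hDs _] := hDpsd.
have [hSs _] := hSpsd.
have hlam' := lam_min hDpsd hlam.
have ycons : consensus ys0 by exact: lift_cons.
have hDy : forall s, (bdiag n Dp) ys0 s = ys0 s by move=> s; exact: (hcons _ ycons s).1.
have hBy : forall s, (bdiag n Bp) ys0 s = ys0 s by move=> s; exact: (hcons _ ycons s).2.
have hCy : forall s, (bdiag n Cp) ys0 s = 0 by exact: (hCnull ys0).2.
have hSy : forall s, sqB ys0 s = ys0 s := sqrt_fix hSpsd hSS hBy.
have hSC : forall x s, sqB ((bdiag n Cp) x) s = (bdiag n Cp) (sqB x) s.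
  apply: comm_sqrt hSpsd hCs _ => x s.
  rewrite hSS hBC; congr (bdiag n Cp); apply: functional_extensionality => s'.
  by rewrite hSS.
have L0 : 0 <= L := ltW Lp.
have horth := grad_orth hNV hdep L0 hcvx hsm hopt.
pose Tm := fun x s => (bdiag n Cp) x s + Pi_par x s.
have hPs := @Pi_par_sym R P I n V.
have hPp := @Pi_par_psd R P I n V.
have hTs : symmetric_op Tm.
  move=> x y; rewrite /Tm dotvDl dotvDr hCs hPs //.
have hTinj : inj_op Tm.
  move=> x hx.
  have e0 : dotv x (Tm x) = 0.
    have -> : Tm x = fun _ => 0 by apply: functional_extensionality.
    by rewrite dotvC dotv0l.
  rewrite /Tm dotvDr in e0.
  have h1 := hCp x; have h2 := hPp.2 x.
  have e1 : dotv x ((bdiag n Cp) x) = 0 by lra.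
  have e2 : dotv x (Pi_par x) = 0 by lra.
  have hcx : consensus x by apply/hCnull; exact: psd_zero hCpsd e1.
  move=> s; rewrite -(Pi_par_fix hcx s); exact: psd_zero hPp e2 s.
have [q hq] := sym_inv hTs hTinj.
pose w := fun t => \sum_r q t r * Gs r.
have hTw : forall s, Tm w s = Gs s by exact: hq.
have hPw : forall s, Pi_par w s = 0.
  apply: dotv_eq0.
  have e : dotv (Pi_par w) (Pi_par w) = dotv (Pi_par w) Gs - dotv (Pi_par w) ((bdiag n Cp) w).
    rewrite -dotvBr; congr dotv; apply: functional_extensionality => s.
    by rewrite -hTw /Tm; ring.
  have e2 : dotv (Pi_par w) ((bdiag n Cp) w) = 0.
    rewrite -(hCs (Pi_par w) w).
    have -> : bdiag n Cp (Pi_par w) = fun _ => 0.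
      by apply: functional_extensionality; apply/hCnull; exact: Pi_par_cons.
    exact: dotv0l.
  by rewrite e e2 dotvC (horth _ (Pi_par_cons w)) subrr.
have hGw : forall s, Gs s = (bdiag n Cp) w s.
  by move=> s; rewrite -hTw /Tm hPw addr0.
have [KP [KPp hKP]] := sym_inv_bound hTs hTinj.
have hperp : forall y, dotv (Pi_perp y) (Pi_perp y) <= KP * dotv ((bdiag n Cp) y) ((bdiag n Cp) y).
  move=> y; have -> : (bdiag n Cp) y = Tm (Pi_perp y); last exact: hKP.
  apply: functional_extensionality => s; rewrite /Tm /Pi_perp.
  rewrite (symB _ _ _ hCs) (symB _ _ _ hPs).
  have -> : (bdiag n Cp) (Pi_par y) s = 0 by move: s; apply/hCnull; exact: Pi_par_cons.
  by rewrite (Pi_par_fix (Pi_par_cons y)); ring.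
have hgl : gamma * L <= lam by rewrite -ler_pdivlMr // ltW.
have hF1 : forall x y : Sidx n V -> R, fobj f x + dotv (gradS g x) (vsub y x) <= fobj f y.
  by move=> x y; rewrite vsubF; apply: Fobj_cvx => // i; exact: (hsm i).1.
have hF2 : forall x y : Sidx n V -> R, fobj f y <= fobj f x + dotv (gradS g x) (vsub y x)
                          + L / 2 * dotv (vsub y x) (vsub y x).
  by move=> x y; rewrite vsubF; apply: Fobj_desc.
have hy' : forall k s, ys k.+1 s = (bdiag n Bp) ((bdiag n Dp) (ys k)) s - gamma * (bdiag n Bp) (gradS g (ys k)) s - zs k s.
  by move=> k s; rewrite hy hA.
have [K1 [K2 hK]] := @main_abstract R _ (bdiag n Bp) (bdiag n Cp) (bdiag n Dp) sqB (fobj f) (gradS g) L lam gamma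
  ys0 w ys zs hBs hCpsd hDpsd hSpsd hSS hSC hBC hv.2 hlam' g0 hgl hF1 hF2
  hSy hDy hCy hGw hz0 hy' hz.
have hsumC : forall k s, \sum_(1 <= t < k.+1) bdiag n Cp (ys t) s = zs k s.
  elim => [|k IH] s; first by rewrite big_geq // hz0.
  by rewrite big_nat_recr //= IH hz.
set Kw := (dotv w w + K2) / 2.
exists (Num.sqrt (KP * K2) * normv Gs + (`|K1| + Kw)).
move=> k k0.
have [hS1 hZ] := hK k k0.
have kp : 0 < (k%:R : R) by rewrite ltr0n.
have kn0 : (k%:R : R) != 0 by rewrite gt_eqF.
set yb := yavg ys k.
set ysum := fun s => \sum_(1 <= t < k.+1) ys t s.
have hyb : yb = fun s => k%:R^-1 * ysum s by [].
have hCsum : bdiag n Cp ysum = zs k.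
  by apply: functional_extensionality => s; rewrite /ysum sym_sumnat // hsumC.
have hCyb : bdiag n Cp yb = fun s => k%:R^-1 * zs k s.
  apply: functional_extensionality => s; rewrite hyb (symZ _ _ _ hCs).
  by rewrite hCsum.
have hGsum : dotv Gs ysum = dotv w (zs k).
  have -> : Gs = bdiag n Cp w by apply: functional_extensionality.
  by rewrite hCs hCsum.
have hGs0 : dotv Gs ys0 = 0 by exact: horth.
have hP1 : dotv (Pi_perp yb) (Pi_perp yb) * (k%:R ^+ 2) <= KP * K2.
  have := hperp yb; rewrite hCyb dotvZl dotvZr => h.
  have h2 : KP * (k%:R^-1 * (k%:R^-1 * dotv (zs k) (zs k))) * k%:R ^+ 2
            = KP * dotv (zs k) (zs k) by field.
  have h3 : dotv (Pi_perp yb) (Pi_perp yb) * k%:R ^+ 2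
           <= KP * (k%:R^-1 * (k%:R^-1 * dotv (zs k) (zs k))) * k%:R ^+ 2.
    by apply: ler_wpM2r => //; exact: sqr_ge0.
  rewrite h2 in h3; apply: le_trans h3 _.
  by apply: ler_wpM2l.
have hP2 : normv (Pi_perp yb) * k%:R <= Num.sqrt (KP * K2).
  rewrite /normv -(ger0_norm (ltW kp)) -sqrtr_sqr -sqrtrM ?dotv_ge0 //.
  have K20 : 0 <= K2 := le_trans (dotv_ge0 _) hZ.
  by rewrite ler_sqrt // mulr_ge0.
set Fb := fobj f yb; set Fs := fobj f ys0.
have hwz : `|dotv w (zs k)| <= Kw.
  have h1 := dotv_ge0 (fun s => w s - zs k s).
  have h2 := dotv_ge0 (fun s => w s + zs k s).
  rewrite dotvBl !dotvBr (dotvC (zs k) w) in h1.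
  rewrite dotvDl !dotvDr (dotvC (zs k) w) in h2.
  rewrite ler_norml /Kw; apply/andP; split; lra.
have hlow : dotv w (zs k) <= k%:R * (Fb - Fs).
  have := hF1 ys0 yb; rewrite dsubr hGs0 subr0 hyb dotvZr hGsum -/Fb -/Fs => h.
  have e : k%:R * (k%:R^-1 * dotv w (zs k)) = dotv w (zs k) by field.
  rewrite -e; apply: ler_wpM2l; [exact: ltW | lra].
have hjen : k%:R * Fb <= \sum_(1 <= t < k.+1) fobj f (ys t).
  have h := fun t => hF1 yb (ys t).
  have hs : \sum_(1 <= t < k.+1) (Fb + dotv (gradS g yb) (vsub (ys t) yb))
            <= \sum_(1 <= t < k.+1) fobj f (ys t).
    by apply: ler_sum => t _; exact: h.
  rewrite big_split /= sumr_const_nat subSS subn0 in hs.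
  rewrite dotv_sumnat in hs.
  have e0 : (fun s => \sum_(1 <= t < k.+1) vsub (ys t) yb s) = fun _ => 0.
    apply: functional_extensionality => s.
    under eq_bigr do rewrite vsubE.
    rewrite sumrB sumr_const_nat subSS subn0 -/(ysum s) hyb -mulr_natl.
    by field.
  by rewrite e0 dotvC dotv0l addr0 -mulr_natl in hs.
have hup : k%:R * (Fb - Fs) <= K1 + dotv w (zs k).
  have e : \sum_(1 <= t < k.+1) (fobj f (ys t) - fobj f ys0 - dotv Gs (vsub (ys t) ys0))
         = \sum_(1 <= t < k.+1) fobj f (ys t) - k%:R * Fs - dotv w (zs k).
    rewrite !sumrB sumr_const_nat subSS subn0.
    congr (_ - _ - _); first by rewrite mulr_natl.
    under eq_bigr do rewrite dsubr hGs0 subr0.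
    by rewrite dotv_sumnat -/ysum hGsum.
  rewrite e in hS1; lra.
have hF : k%:R * `|Fb - Fs| <= `|K1| + Kw.
  rewrite -(ger0_norm (ltW kp)) -normrM ler_norml; apply/andP; split.
    have := ler_norm K1; have := ler_normlW hwz; have := lerNnormlW hwz; lra.
  have := ler_norm K1; have := ler_normlW hwz; lra.
rewrite /merit -/ys0 -/Gs -/Fb -/Fs ge_max; apply/andP; split.
  rewrite ler_pdivlMr //.
  have h1 : normv (Pi_perp yb) * normv Gs * k%:R <= Num.sqrt (KP * K2) * normv Gs.
    by rewrite mulrAC; apply: ler_wpM2r => //; exact: normv_ge0.
  have := normr_ge0 K1; have := normr_ge0 (dotv w (zs k)); lra.
rewrite ler_pdivlMr // mulrC; apply: le_trans hF _.
have : 0 <= Num.sqrt (KP * K2) * normv Gs by rewrite mulr_ge0 ?sqrtr_ge0 ?normv_ge0.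
lra.
Qed.
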